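(* Let $n,m\ge1$ and $1\le t\le m$ be integers, and let $\pi$ be a uniformly random permutation of $[nm]$. For $i\in[n]$ let $U^i_\pi=\{\pi(1),\dots,\pi(t)\}\cap\{m(i-1)+1,\dots,mi\}$ and $C_\pi=\max_{i\in[n]}|U^i_\pi|$. Then for every integer $j$ with $1\le j<t$, $$\Pr_\pi[C_\pi=j]\le\frac{n\binom{m}{t}}{\binom{nm}{t}}\,(nm)^{3(t-j)}.$$ *)

(* Defs.v *)
(* Elements of [nm] are represented 0-indexed by 'I_(n*m). *)
From HB Require Import structures.
From mathcomp Require Import all_boot all_order all_algebra all_fingroup.
Set Implicit Arguments. Unset Strict Implicit. Unset Printing Implicit Defensive.

Definition Ublock (n m t : nat) (pi : {perm 'I_(n * m)}) (i : nat) : {set 'I_(n * m)} :=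
  [set x | [exists k : 'I_(n * m), (k < t) && (pi k == x)] &&
           (m * i <= x) && (x < m * i + m)].

Arguments Ublock : clear implicits.

Definition Cmax (n m t : nat) (pi : {perm 'I_(n * m)}) : nat :=
  (\max_(i < n) #|Ublock n m t pi i|)%N.

Arguments Cmax : clear implicits.

Definition prob_C_eq (n m t j : nat) : rat :=
  (#|[set pi : {perm 'I_(n * m)} | Cmax n m t pi == j]|%:R /
   #|[set: {perm 'I_(n * m)}]|%:R)%R.
Arguments prob_C_eq : clear implicits.

(* Main.v *)
Require Import Defs.
From HB Require Import structures.
From mathcomp Require Import all_boot all_order all_algebra all_fingroup.
Import GRing.Theory Num.Theory.
Set Implicit Arguments. Unset Strict Implicit. Unset Printing Implicit Defensive.

Lemma perm_onto (X : finType) (S S' : {set X}) :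
  #|S| = #|S'| -> exists tau : {perm X}, tau @: S = S'.
Proof.
move: {2}#|S :\: S'| (leqnn #|S :\: S'|) => k.
elim: k S => [|k IH] S Hk Hc.
  exists 1%g.
  have sub: S \subset S' by rewrite -setD_eq0 -cards_eq0 -leqn0.
  have -> : [set (1%g : {perm X}) x | x in S] = S.
    apply/setP=> z; apply/imsetP/idP => [[w wS ->]|zS]; first by rewrite perm1.
    by exists z; rewrite ?perm1.
  by apply/eqP; rewrite eqEcard sub Hc leqnn.
have [e0|] := posnP #|S :\: S'|.
  by apply: (IH S) => //; rewrite e0.
move=> /card_gt0P [x xD].
have hD : #|S' :\: S| = #|S :\: S'|.
  by rewrite !cardsD Hc setIC.
have /card_gt0P [y yD] : 0 < #|S' :\: S| by rewrite hD; apply/card_gt0P; exists x.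
move: xD yD; rewrite !inE => /andP [xS' xS] /andP [yS yS'].
pose S1 := tperm x y @: S.
have c1 : #|S1| = #|S| by rewrite card_imset //; apply: perm_inj.
have sub1 : S1 :\: S' \subset (S :\: S') :\ x.
  apply/subsetP => z; rewrite !inE => /andP [zS' /imsetP [w wS zE]].
  rewrite zE in zS' *; move: zS'; case: (tpermP x y w) => [wx|wy|wx wy].
      by rewrite yS'.
    by move: wS; rewrite wy (negbTE yS).
  by move=> H; rewrite H wS !andbT; apply/eqP.
have lt1 : #|S1 :\: S'| < #|S :\: S'|.
  apply: (leq_ltn_trans (subset_leq_card sub1)).
  by rewrite (cardsD1 x (S :\: S')) !inE xS xS'.
have Hk1 : #|S1 :\: S'| <= k by rewrite -ltnS; apply: leq_trans lt1 Hk.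
have [tau Htau] := IH S1 Hk1 (etrans c1 Hc).
exists (tperm x y * tau)%g; rewrite -Htau /S1 -imset_comp.
by apply: eq_imset => z; rewrite permM.
Qed.

Lemma imsetM (X : finType) (p q : {perm X}) (A : {set X}) :
  (p * q)%g @: A = q @: (p @: A).
Proof. by rewrite -imset_comp; apply: eq_imset => z; rewrite permM. Qed.

Lemma imsetK1 (X : finType) (p : {perm X}) (A : {set X}) : p^-1%g @: (p @: A) = A.
Proof. by rewrite -imsetM mulgV; apply/setP => z; apply/imsetP/idP => [[w wA ->]|zA];
  [rewrite perm1|exists z; rewrite ?perm1]. Qed.

Section Fiber.
Variables (X : finType) (T : {set X}).
Definition fib (S : {set X}) := [set p : {perm X} | p @: T == S].

Lemma card_fib (S : {set X}) : #|S| = #|T| -> #|fib S| = #|fib T|.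
Proof.
move=> /esym /perm_onto [tau Ht].
have -> : fib S = (fun p => p * tau)%g @: fib T.
  apply/setP => p; rewrite inE; apply/eqP/imsetP => [HS|[q]].
    exists (p * tau^-1)%g; last by rewrite -mulgA mulVg mulg1.
    by rewrite inE imsetM HS -Ht imsetK1.
  by rewrite inE => /eqP Hq ->; rewrite imsetM Hq.
by rewrite card_imset //; apply: mulIg.
Qed.

Lemma count_fib (G : pred {set X}) :
  #|[set p : {perm X} | G (p @: T)]| =
  (#|[set S : {set X} | (#|S| == #|T|) && G S]| * #|fib T|)%N.
Proof.
rewrite -sum1_card (partition_big (fun p : {perm X} => p @: T)
   (fun S => (#|S| == #|T|) && G S)); last first.
  by move=> p; rewrite inE => ->; rewrite card_imset ?eqxx //; apply: perm_inj.
rewrite -sum_nat_const; apply: eq_big => [S|S /andP [cS GS]]; first by rewrite inE.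
rewrite -(card_fib (eqP cS)) -sum1_card; apply: eq_bigl => p.
rewrite !inE; apply/andP/eqP => [[_ /eqP]//|HS]; split => //.
all: by rewrite HS ?eqxx.
Qed.
End Fiber.

Lemma bin_step m k : k < m -> 'C(m, k) <= 'C(m, k.+1) * m.
Proof.
move=> km; apply: (@leq_trans ((m - k) * 'C(m, k))).
  by rewrite leq_pmull // subn_gt0.
by rewrite -mul_bin_left mulnC leq_mul2l km orbT.
Qed.

Lemma bin_steps m j d : j + d <= m -> 'C(m, j) <= 'C(m, j + d) * m ^ d.
Proof.
elim: d => [|d IH] h; first by rewrite addn0 expn0 muln1.
have h' : j + d <= m by apply: leq_trans h; rewrite addnS.
apply: (leq_trans (IH h')).
rewrite expnS mulnA leq_mul2r; apply/orP; right.
by rewrite addnS; apply: bin_step; rewrite -addnS.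
Qed.

Lemma ffact_le_exp N k : N ^_ k <= N ^ k.
Proof.
elim: k => [|k IH] //; rewrite ffactnSr expnSr; apply: leq_mul => //; exact: leq_subr.
Qed.

Lemma bin_le_exp N k : 'C(N, k) <= N ^ k.
Proof.
apply: leq_trans (ffact_le_exp N k); rewrite -bin_ffact; apply: leq_pmulr; exact: fact_gt0.
Qed.

Lemma count_good (N n m t j : nat) (B : 'I_n -> {set 'I_N})
  (hB : forall i, #|B i| <= m) (hjt : j <= t) :
  #|[set S : {set 'I_N} | (#|S| == t) && [exists i, #|S :&: B i| == j]]|
    <= n * ('C(m, j) * N ^ (t - j)).
Proof.
pose G i := [set S : {set 'I_N} | (#|S| == t) && (#|S :&: B i| == j)].
have HG i : #|G i| <= 'C(m, j) * N ^ (t - j).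
  pose f (S : {set 'I_N}) := (S :&: B i, S :\: B i).
  have finj : injective f.
    by move=> S1 S2 [e1 e2]; rewrite -(setID S1 (B i)) -(setID S2 (B i)) e1 e2.
  rewrite -(card_imset _ finj).
  apply: (leq_trans (subset_leq_card (_ : _ \subset
     setX [set A : {set 'I_N} | A \subset B i & #|A| == j] [set A : {set 'I_N} | #|A| == t - j]))).
    apply/subsetP => x /imsetP [S]; rewrite inE => /andP [/eqP cS /eqP cI] ->.
    rewrite !inE /= subsetIr cI eqxx /=.
    by rewrite cardsD cS cI.
  rewrite cardsX cards_draws card_draws card_ord.
  apply: leq_mul; last exact: bin_le_exp.
  exact: leq_bin2l.
apply: (@leq_trans (\sum_(i < n) #|G i|)); last first.
  have H1 : \sum_(i < n) #|G i| <= \sum_(i < n) ('C(m, j) * N ^ (t - j)).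
    by apply: leq_sum => i _; exact: HG.
  by apply: leq_trans H1 _; rewrite sum_nat_const card_ord.
apply: (@leq_trans (\sum_(S : {set 'I_N}) \sum_(i < n) (S \in G i))).
  rewrite -sum1_card big_mkcond /=; apply: leq_sum => S _.
  case: ifP => //; rewrite inE => /andP [cS /existsP [i0 Hi]].
  rewrite (bigD1 i0) //= inE cS Hi /=; exact: leq_addr.
rewrite exchange_big /=; apply: leq_sum => i _.
rewrite -sum1_card [X in _ <= X]big_mkcond /=; apply: leq_sum => S _; by case: (S \in G i).
Qed.

Local Open Scope ring_scope.

Theorem mainTheorem16 (n m t j : nat) (hn : (1 <= n)%N) (hm : (1 <= m)%N)
  (ht1 : (1 <= t)%N) (htm : (t <= m)%N) (hj1 : (1 <= j)%N) (hjt : (j < t)%N) :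
  prob_C_eq n m t j <=
  (n * 'C(m, t))%:R / ('C(n * m, t))%:R * ((n * m) ^ (3 * (t - j)))%:R :> rat.
Proof.
set N := (n * m)%N.
have mN : (m <= N)%N by rewrite /N leq_pmull.
have tN : (t <= N)%N := leq_trans htm mN.
pose T : {set 'I_N} := [set k : 'I_N | (k < t)%N].
have cT : #|T| = t.
  have -> : T = (widen_ord tN) @: [set: 'I_t].
    apply/setP => x; rewrite inE; apply/idP/imsetP => [xt|[y _ ->]]; last by rewrite /= ltn_ord.
    by exists (Ordinal xt) => //; apply: val_inj.
  by rewrite card_imset ?cardsT ?card_ord //; move=> a b /(congr1 val) /= /val_inj.
pose B (i : 'I_n) : {set 'I_N} := [set x : 'I_N | (m * i <= x)%N && (x < m * i + m)%N].
have cB i : (#|B i| <= m)%N.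
  have [e0|[x0 _]] := set_0Vmem (B i); first by rewrite e0 cards0.
  pose f (k : 'I_m) : 'I_N := insubd x0 (m * i + k)%N.
  apply: (@leq_trans #|f @: [set: 'I_m]|); last by rewrite (leq_trans (leq_imset_card _ _)) // cardsT card_ord.
  apply: subset_leq_card; apply/subsetP => x; rewrite inE => /andP [h1 h2].
  have hx : (x - m * i < m)%N by rewrite ltn_subLR.
  apply/imsetP; exists (Ordinal hx) => //.
  by apply: val_inj; rewrite /f val_insubd /= subnKC // ltn_ord.
pose CS (S : {set 'I_N}) := (\max_(i < n) #|S :&: B i|)%N.
have HC p : Cmax n m t p = CS (p @: T).
  rewrite /Cmax /CS; apply: eq_bigr => i _; apply: eq_card => x.
  rewrite /Ublock !inE -andbA; congr andb; apply/existsP/imsetP => [[k /andP [kt /eqP <-]]|[k]].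
    by exists k; rewrite ?inE.
  by rewrite inE => kt ->; exists k; rewrite kt eqxx.
pose F := #|fib T T|.
have hA : #|[set p : {perm 'I_N} | Cmax n m t p == j]| =
   (#|[set S : {set 'I_N} | (#|S| == #|T|) && (CS S == j)]| * F)%N.
  rewrite -(count_fib T (fun S : {set 'I_N} => CS S == j)); apply: eq_card => p; by rewrite !inE HC.
have hP : #|[set: {perm 'I_N}]| = ('C(N, t) * F)%N.
  rewrite -cT -[N in 'C(N, _)]card_ord -card_draws.
  have -> : [set A : {set 'I_N} | #|A| == #|T|] = [set S : {set 'I_N} | (#|S| == #|T|) && predT S].
    by apply/setP => S; rewrite !inE andbT.
  rewrite -(count_fib T predT); apply: eq_card => p; by rewrite !inE.
pose g := #|[set S : {set 'I_N} | (#|S| == #|T|) && (CS S == j)]|.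
have hg : (g <= n * ('C(m, j) * N ^ (t - j)))%N.
  apply: leq_trans (count_good cB (ltnW hjt)).
  apply: subset_leq_card; apply/subsetP => S; rewrite !inE cT => /andP [-> /eqP HS] /=.
  have n0 : (0 < #|'I_n|)%N by rewrite card_ord.
  have [i0 Hi0] := eq_bigmax (fun i : 'I_n => #|S :&: B i|) n0.
  by apply/existsP; exists i0; rewrite -HS /CS Hi0.
have hg2 : (g <= n * 'C(m, t) * N ^ (3 * (t - j)))%N.
  apply: leq_trans hg _.
  have d0 : (0 < t - j)%N by rewrite subn_gt0.
  have N0 : (0 < N)%N by rewrite muln_gt0 hn hm.
  have h1 : ('C(m, j) <= 'C(m, t) * m ^ (t - j))%N.
    have e : (j + (t - j))%N = t by rewrite subnKC // ltnW.
    by have := @bin_steps m j (t - j); rewrite e; apply.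
  have h2 : (m ^ (t - j) <= N ^ (t - j))%N by rewrite leq_exp2r.
  rewrite -mulnA leq_mul2l; apply/orP; right.
  apply: (leq_trans (leq_mul h1 (leqnn _))).
  rewrite -mulnA leq_mul2l; apply/orP; right.
  apply: (leq_trans (leq_mul h2 (leqnn _))).
  by rewrite -expnD leq_pexp2l // mulSn mul2n -addnn leq_addl.
have F0 : (0 < F)%N.
  have : (0 < #|[set: {perm 'I_N}]|)%N by apply/card_gt0P; exists 1%g; rewrite inE.
  by rewrite hP muln_gt0 => /andP [].
have C0 : (0 < 'C(N, t))%N by rewrite bin_gt0.
rewrite /prob_C_eq hA hP -/g.
have -> : (g * F)%:R / ('C(N, t) * F)%:R = g%:R / ('C(N, t))%:R :> rat.
  rewrite !natrM invfM mulrACA mulfV ?mulr1 // pnatr_eq0 -lt0n //.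
by rewrite mulrAC -natrM ler_wpM2r ?invr_ge0 ?ler0n // ler_nat.
Qed.
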